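(* There is a norm $\|\cdot\|$ on $c_{00}$ satisfying, for every $x\in c_{00}$, the implicit equation $$\|x\|=\max\Big\{\|x\|_\infty,\ \sup\Big\{\frac1{f(\ell)}\sum_{i=1}^\ell |||E_ix|||_{m_i}:\ \ell\in\mathbb{N},\ ((m_i,E_i))_{i=1}^\ell\ \text{admissible}\Big\}\Big\},$$ where for $m\ge2$, $|||\cdot|||_m$ is the norm on $c_{00}$ given by $|||x|||_m=\sup\{\frac1m\sum_{i=1}^m\|F_ix\|:F_1<\cdots<F_m\}$.
   Context: $c_{00}$ is the space of finitely supported real sequences on $\mathbb{N}$; $\|x\|_\infty=\max_i|x(i)|$. For $t>0$, $f(t)=\log_2(t+1)$. For $E,F\subseteq\mathbb{N}$, $E<F$ means $\max E<\min F$, and $Ex$ is the restriction of $x$ to $E$ ($Ex(i)=x(i)$ for $i\in E$, $0$ otherwise). A finite sequence of pairs $((m_i,E_i))_{i=1}^k$, with integers $m_1<\cdots<m_k$ and finite subsets $E_1<\cdots<E_k$ of $\mathbb{N}$, is admissible if $m_1\ge2$ and $f(m_{i+1})>\sum_{j=1}^i|E_j|$ for $1\le i<k$. *)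

(* Defs.v *)
From Stdlib Require Import Reals List Arith Lra.
Import ListNotations.
Open Scope R_scope.

(* c00: finitely supported real sequences on nat (index 0 plays the role of 1). *)
Definition c00 (x : nat -> R) : Prop :=
  exists n : nat, forall i : nat, (n <= i)%nat -> x i = 0.

(* Finite subsets of nat are represented by lists (membership = In). *)
Definition restr (E : list nat) (x : nat -> R) : nat -> R :=
  fun i => if existsb (Nat.eqb i) E then x i else 0.

Definition set_lt (E F : list nat) : Prop :=
  forall a b, In a E -> In b F -> (a < b)%nat.

Definition f (t : R) : R := ln (t + 1) / ln 2.

Definition is_norm_c00 (N : (nat -> R) -> R) : Prop :=
  (forall x y, c00 x -> c00 y -> N (fun i => x i + y i) <= N x + N y) /\
  (forall (a : R) x, c00 x -> N (fun i => a * x i) = Rabs a * N x) /\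
  (forall x, c00 x -> N x = 0 -> forall i, x i = 0).

Definition rsum (l : list R) : R := fold_right Rplus 0 l.

Definition increasing_blocks (Fs : list (list nat)) : Prop :=
  forall i j, (i < j < length Fs)%nat -> set_lt (nth i Fs nil) (nth j Fs nil).

Definition triple_set (N : (nat -> R) -> R) (m : nat) (x : nat -> R) : R -> Prop :=
  fun v => exists Fs : list (list nat),
    length Fs = m /\ increasing_blocks Fs /\
    v = / INR m * rsum (map (fun F => N (restr F x)) Fs).

Definition pdef : nat * list nat := (0%nat, nil).

(* sum_{j=1}^{i} |E_j| (with i counted from 1) *)
Definition card_prefix (A : list (nat * list nat)) (i : nat) : nat :=
  fold_right Nat.add 0%nat (map (fun p => length (snd p)) (firstn i A)).

(* admissibility of ((m_i, E_i))_{i=1}^k, k >= 1; list index i-1 holds (m_i,E_i) *)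
Definition admissible (A : list (nat * list nat)) : Prop :=
  (1 <= length A)%nat /\
  (forall i, (i < length A)%nat -> NoDup (snd (nth i A pdef))) /\
  (2 <= fst (nth 0 A pdef))%nat /\
  (forall i j, (i < j < length A)%nat ->
      (fst (nth i A pdef) < fst (nth j A pdef))%nat /\
      set_lt (snd (nth i A pdef)) (snd (nth j A pdef))) /\
  (forall i, (i + 1 < length A)%nat ->
      f (INR (fst (nth (i + 1) A pdef))) > INR (card_prefix A (i + 1))).

Definition outer_set (N : (nat -> R) -> R) (x : nat -> R) : R -> Prop :=
  fun v => exists (A : list (nat * list nat)) (ts : list R),
    admissible A /\ length ts = length A /\
    (forall i, (i < length A)%nat ->
        is_lub (triple_set N (fst (nth i A pdef)) (restr (snd (nth i A pdef)) x))
               (nth i ts 0)) /\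
    v = / f (INR (length A)) * rsum ts.

(* Main.v *)
From Stdlib Require Import Reals List Arith Lra Lia.
From Stdlib Require Import Classical ClassicalEpsilon FunctionalExtensionality.
Import ListNotations.
Require Import Defs.
Open Scope R_scope.

Definition Sup (P : R -> Prop) : R :=
  match excluded_middle_informative (exists l, is_lub P l) with
  | left h => proj1_sig (constructive_indefinite_description _ h)
  | right _ => 0 end.

Lemma Sup_spec P : (exists l, is_lub P l) -> is_lub P (Sup P).
Proof.
  intro h. unfold Sup. destruct excluded_middle_informative as [h'|n].
  - exact (proj2_sig (constructive_indefinite_description _ h')).
  - contradiction.
Qed.

Lemma lub_ex (P : R -> Prop) b : (forall v, P v -> v <= b) -> (exists v, P v) -> exists l, is_lub P l.
Proof.
  intros hb hn. destruct (completeness P) as [m hm]; [exists b; exact hb|exact hn|].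
  exists m; exact hm.
Qed.

Lemma lub_le P l b : is_lub P l -> (forall v, P v -> v <= b) -> l <= b.
Proof. intros [_ h] hb. apply h. exact hb. Qed.

Lemma le_lub P l v : is_lub P l -> P v -> v <= l.
Proof. intros [h _] hv. apply h. exact hv. Qed.

Fixpoint L (n : nat) (x : nat -> R) : R :=
  match n with O => 0 | S k => L k x + Rabs (x k) end.
Definition vanish n (x : nat -> R) := forall i, (n <= i)%nat -> x i = 0.

Lemma L_nonneg n x : 0 <= L n x.
Proof. induction n; simpl. lra. pose proof (Rabs_pos (x n)); lra. Qed.

Lemma L_ge n x i : (i < n)%nat -> Rabs (x i) <= L n x.
Proof.
  induction n; intros h. lia. simpl.
  destruct (Nat.eq_dec i n) as [->|ne].
  - pose proof (L_nonneg n x); lra.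
  - pose proof (Rabs_pos (x n)). specialize (IHn ltac:(lia)); lra.
Qed.

Lemma vanish_abs n x i : vanish n x -> Rabs (x i) <= L n x.
Proof.
  intro hv. destruct (Nat.lt_ge_cases i n) as [h|h].
  - apply L_ge; exact h.
  - rewrite (hv i h), Rabs_R0. apply L_nonneg.
Qed.

Lemma vanish_restr n E x : vanish n x -> vanish n (restr E x).
Proof. intros h i hi. unfold restr. destruct existsb; [apply h; exact hi|reflexivity]. Qed.

Lemma c00_restr E x : c00 x -> c00 (restr E x).
Proof. intros [n h]. exists n. apply vanish_restr. exact h. Qed.

Lemma c00_add x y : c00 x -> c00 y -> c00 (fun i => x i + y i).
Proof.
  intros [n hn] [m hm]. exists (Nat.max n m). intros i hi.
  rewrite hn, hm by lia. lra.
Qed.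

Lemma c00_scale a x : c00 x -> c00 (fun i => a * x i).
Proof. intros [n hn]. exists n. intros i hi. rewrite hn by lia. lra. Qed.

Lemma restr_add E x y : restr E (fun i => x i + y i) = fun i => restr E x i + restr E y i.
Proof. apply functional_extensionality. intro i. unfold restr. destruct existsb; lra. Qed.

Lemma restr_scale E a x : restr E (fun i => a * x i) = fun i => a * restr E x i.
Proof. apply functional_extensionality. intro i. unfold restr. destruct existsb; lra. Qed.

Definition inb (E : list nat) (k : nat) : bool := existsb (Nat.eqb k) E.

Fixpoint Lp n (p : nat -> bool) (x : nat -> R) : R :=
  match n with O => 0 | S k => Lp k p x + (if p k then Rabs (x k) else 0) end.

Lemma L_restr_Lp n E x : L n (restr E x) = Lp n (inb E) x.
Proof.
  induction n; simpl. reflexivity. rewrite IHn. unfold restr, inb.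
  destruct existsb; [reflexivity|rewrite Rabs_R0; reflexivity].
Qed.

Lemma Lp_add n p q x : (forall k, p k = true -> q k = false) ->
  Lp n p x + Lp n q x = Lp n (fun k => orb (p k) (q k)) x.
Proof.
  intro h. induction n; simpl. lra. rewrite <- IHn.
  specialize (h n). destruct (p n), (q n); simpl; try lra.
Qed.

Lemma Lp_le n p x : Lp n p x <= L n x.
Proof.
  induction n; simpl. lra. pose proof (Rabs_pos (x n)). destruct (p n); lra.
Qed.

Lemma L_restr n E x : L n (restr E x) <= L n x.
Proof. rewrite L_restr_Lp. apply Lp_le. Qed.

Fixpoint pw (Es : list (list nat)) : Prop :=
  match Es with
  | nil => True
  | E :: Es' => (forall E', In E' Es' -> forall k, inb E k = true -> inb E' k = false) /\ pw Es'
  end.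

Lemma inb_In E k : inb E k = true -> In k E.
Proof.
  unfold inb. intro h. apply existsb_exists in h. destruct h as [z [hz e]].
  apply Nat.eqb_eq in e. subst. exact hz.
Qed.

Lemma set_lt_inb E F k : set_lt E F -> inb E k = true -> inb F k = false.
Proof.
  intros h h1. destruct (inb F k) eqn:e; [|reflexivity].
  apply inb_In in h1, e. specialize (h k k h1 e). lia.
Qed.

Lemma pw_of_nth Es : (forall i j, (i < j < length Es)%nat -> set_lt (nth i Es nil) (nth j Es nil)) -> pw Es.
Proof.
  induction Es as [|E Es IH]; simpl; intro h. exact I. split.
  - intros E' hE' k hk. destruct (In_nth Es E' nil hE') as [j [hj ej]].
    apply (set_lt_inb E E'); [|exact hk]. rewrite <- ej.
    apply (h 0%nat (S j)). lia.
  - apply IH. intros i j hij. apply (h (S i) (S j)). lia.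
Qed.

Definition rsum_map_Lp n x Es := rsum (map (fun E => Lp n (inb E) x) Es).

Lemma pw_sum n x Es : pw Es -> forall q, (forall E, In E Es -> forall k, q k = true -> inb E k = false) ->
  Lp n q x + rsum (map (fun E => Lp n (inb E) x) Es) <= L n x.
Proof.
  induction Es as [|E Es IH]; simpl; intros hpw q hq.
  - pose proof (Lp_le n q x); lra.
  - destruct hpw as [h1 h2].
    rewrite <- Rplus_assoc, Lp_add.
    + apply IH; [exact h2|]. intros E' hE' k hk.
      destruct (q k) eqn:e; simpl in hk.
      * apply hq; [right; exact hE'|exact e].
      * apply (h1 E' hE' k hk).
    + intros k hk. apply hq; [left; reflexivity|exact hk].
Qed.

Lemma pw_sum0 n x Es : pw Es -> rsum (map (fun E => Lp n (inb E) x) Es) <= L n x.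
Proof.
  intro h. pose proof (pw_sum n x Es h (fun _ => false)) as H.
  simpl in H. assert (Lp n (fun _ => false) x = 0) as e.
  { clear. induction n; simpl; [reflexivity|rewrite IHn; lra]. }
  rewrite e, Rplus_0_l in H. apply H. intros; discriminate.
Qed.

Lemma rsum_le_nth l1 l2 : length l1 = length l2 ->
  (forall i, (i < length l1)%nat -> nth i l1 0 <= nth i l2 0) -> rsum l1 <= rsum l2.
Proof.
  revert l2; induction l1 as [|a l1 IH]; intros [|b l2] hl h; simpl in *; try lia.
  - lra.
  - apply Rplus_le_compat.
    + apply (h 0%nat). lia.
    + apply IH. lia. intros i hi. apply (h (S i)). lia.
Qed.

Lemma rsum_map_le {A} (g h : A -> R) l : (forall z, In z l -> g z <= h z) -> rsum (map g l) <= rsum (map h l).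
Proof.
  induction l as [|a l IH]; simpl; intro H. lra.
  apply Rplus_le_compat. apply H; left; reflexivity. apply IH. intros; apply H; right; assumption.
Qed.

Lemma rsum_map_add {A} (g h : A -> R) l : rsum (map (fun z => g z + h z) l) = rsum (map g l) + rsum (map h l).
Proof. induction l; simpl; lra. Qed.

Lemma rsum_map_scale {A} c (g : A -> R) l : rsum (map (fun z => c * g z) l) = c * rsum (map g l).
Proof. induction l; simpl; lra. Qed.

Lemma rsum_bound l c : (forall z, In z l -> z <= c) -> rsum l <= INR (length l) * c.
Proof.
  induction l as [|a l IH]; intro H. simpl; lra. change (rsum (a::l)) with (a + rsum l). change (length (a::l)) with (S (length l)).
  rewrite S_INR. assert (a <= c) by (apply H; left; reflexivity).
  assert (rsum l <= INR (length l) * c) by (apply IH; intros; apply H; right; assumption). lra.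
Qed.

Lemma rsum_nonneg_le_scale l c : (forall z, In z l -> z <= c) -> 0 <= c -> / INR (length l) * rsum l <= c.
Proof.
  intros H hc. pose proof (rsum_bound l c H) as hb.
  destruct (length l) as [|k] eqn:e.
  - simpl. rewrite Rinv_0. lra.
  - assert (0 < INR (S k)) by (apply lt_0_INR; lia).
    apply Rmult_le_reg_l with (INR (S k)); [assumption|].
    rewrite <- Rmult_assoc, Rinv_r by lra. lra.
Qed.

Lemma Rinv_INR_nonneg m : 0 <= / INR m.
Proof.
  destruct m. simpl. rewrite Rinv_0. lra.
  left. apply Rinv_0_lt_compat. apply lt_0_INR. lia.
Qed.

Lemma f_ge1 l : (1 <= l)%nat -> 1 <= f (INR l).
Proof.
  intro h. unfold f. pose proof ln_lt_2.
  assert (2 <= INR l + 1). { apply le_INR in h. simpl in h. lra. }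
  assert (ln 2 <= ln (INR l + 1)).
  { destruct (Rle_lt_or_eq_dec _ _ H0) as [h2|h2]. left; apply ln_increasing; lra. rewrite h2; lra. }
  apply Rmult_le_reg_r with (ln 2). lra. unfold Rdiv. rewrite Rmult_assoc, Rinv_l by lra. lra.
Qed.

Lemma homog_from_le (G : (nat->R)->R) :
  (forall x, c00 x -> 0 <= G x) ->
  (forall a x, c00 x -> G (fun i => a * x i) <= Rabs a * G x) ->
  forall a x, c00 x -> G (fun i => a * x i) = Rabs a * G x.
Proof.
  intros hpos hle a x hx.
  destruct (Req_dec a 0) as [->|na].
  - pose proof (hle 0 x hx). pose proof (hpos _ (c00_scale 0 x hx)). rewrite Rabs_R0 in *. lra.
  - apply Rle_antisym. apply hle; exact hx.
    pose proof (hle (/ a) (fun i => a * x i) (c00_scale a x hx)) as H. cbv beta in H.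
    replace (fun i => / a * (a * x i)) with x in H.
    2:{ apply functional_extensionality; intro i. field. exact na. }
    rewrite Rabs_inv in H.
    assert (0 < Rabs a) by (apply Rabs_pos_lt; exact na).
    apply Rmult_le_compat_l with (r := Rabs a) in H; [|lra].
    rewrite <- Rmult_assoc, Rinv_r in H by lra. lra.
Qed.

Definition supset (x : nat -> R) := fun v => exists i, v = Rabs (x i).
Definition supn x := Sup (supset x).

Lemma supn_lub x : c00 x -> is_lub (supset x) (supn x).
Proof.
  intros [n hn]. apply Sup_spec, lub_ex with (L n x).
  - intros v [i ->]. apply vanish_abs. exact hn.
  - exists (Rabs (x 0%nat)). exists 0%nat. reflexivity.
Qed.

Lemma supn_ge x i : c00 x -> Rabs (x i) <= supn x.
Proof. intro hx. apply le_lub with (supset x). apply supn_lub; exact hx. exists i; reflexivity. Qed.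

Definition Sn (N : (nat->R)->R) : Prop :=
  (forall x y, c00 x -> c00 y -> N (fun i => x i + y i) <= N x + N y) /\
  (forall a x, c00 x -> N (fun i => a * x i) = Rabs a * N x) /\
  (forall x i, c00 x -> Rabs (x i) <= N x) /\
  (forall x n, vanish n x -> N x <= L n x).

Lemma Sn_supn : Sn supn.
Proof.
  split; [|split; [|split]].
  - intros x y hx hy. apply lub_le with (supset (fun i => x i + y i)).
    apply supn_lub, c00_add; assumption.
    intros v [i ->]. pose proof (Rabs_triang (x i) (y i)).
    pose proof (supn_ge x i hx). pose proof (supn_ge y i hy). lra.
  - apply homog_from_le.
    + intros x hx. pose proof (supn_ge x 0 hx). pose proof (Rabs_pos (x 0%nat)). lra.
    + intros a x hx. apply lub_le with (supset (fun i => a * x i)).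
      apply supn_lub, c00_scale; assumption.
      intros v [i ->]. rewrite Rabs_mult. apply Rmult_le_compat_l. apply Rabs_pos.
      apply supn_ge; exact hx.
  - intros x i hx. apply supn_ge; exact hx.
  - intros x n hn. apply lub_le with (supset x). apply supn_lub. exists n; exact hn.
    intros v [i ->]. apply vanish_abs; exact hn.
Qed.

Lemma rsum_map_scale_bound {A} (g : A -> R) l c : (forall z, In z l -> g z <= c) -> 0 <= c ->
  / INR (length l) * rsum (map g l) <= c.
Proof.
  intros H hc. rewrite <- (length_map g l). apply rsum_nonneg_le_scale; [|exact hc].
  intros z hz. apply in_map_iff in hz. destruct hz as [w [<- hw]]. apply H; exact hw.
Qed.

Lemma triple_bound N m y n v : Sn N -> vanish n y -> triple_set N m y v -> v <= L n y.
Proof.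
  intros (h1 & h2 & h3 & h4) hn [Fs [hl [hinc ->]]]. rewrite <- hl.
  apply rsum_map_scale_bound; [|apply L_nonneg].
  intros F _. eapply Rle_trans. apply h4. apply vanish_restr; exact hn. apply L_restr.
Qed.

Lemma triple_nonempty N m y : exists v, triple_set N m y v.
Proof.
  exists (/ INR m * rsum (map (fun F => N (restr F y)) (repeat nil m))).
  exists (repeat nil m). split; [apply repeat_length|split; [|reflexivity]].
  intros i j h a b ha hb. rewrite nth_repeat in ha. destruct ha.
Qed.

Lemma triple_lub N m y : Sn N -> c00 y -> is_lub (triple_set N m y) (Sup (triple_set N m y)).
Proof.
  intros hN [n hn]. apply Sup_spec, lub_ex with (L n y).
  intros v hv. apply (triple_bound N m y n v hN hn hv). apply triple_nonempty.
Qed.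

Definition g N x (p : nat * list nat) := Sup (triple_set N (fst p) (restr (snd p) x)).

Lemma g_le N x n p : Sn N -> vanish n x -> g N x p <= L n (restr (snd p) x).
Proof.
  intros hN hn. unfold g. apply lub_le with (triple_set N (fst p) (restr (snd p) x)).
  apply triple_lub; [exact hN|apply c00_restr; exists n; exact hn].
  intros v hv. apply (triple_bound N (fst p) (restr (snd p) x) n v hN); [apply vanish_restr; exact hn|exact hv].
Qed.

Lemma outer_canon N x v : Sn N -> c00 x -> outer_set N x v ->
  exists A, admissible A /\ v = / f (INR (length A)) * rsum (map (g N x) A).
Proof.
  intros hN hx [A [ts [hA [hl [hts ->]]]]]. exists A. split; [exact hA|].
  f_equal. f_equal. apply nth_ext with 0 0. rewrite length_map; exact hl.
  intros i hi. rewrite (@nth_indep _ (map (g N x) A) i 0 (g N x pdef)) by (rewrite length_map; lia).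
  rewrite map_nth. apply (is_lub_u _ _ _ (hts i ltac:(lia))). apply triple_lub; [exact hN|].
  apply c00_restr; exact hx.
Qed.

Lemma outer_mk N x A : Sn N -> c00 x -> admissible A ->
  outer_set N x (/ f (INR (length A)) * rsum (map (g N x) A)).
Proof.
  intros hN hx hA. exists A, (map (g N x) A). split; [exact hA|]. split; [apply length_map|].
  split; [|reflexivity]. intros i hi.
  rewrite (@nth_indep _ (map (g N x) A) i 0 (g N x pdef)) by (rewrite length_map; lia).
  rewrite map_nth. apply triple_lub; [exact hN|]. apply c00_restr; exact hx.
Qed.

Lemma inv_f_bounds A : admissible A -> 0 < / f (INR (length A)) <= 1.
Proof.
  intros [hl _]. pose proof (f_ge1 _ hl). split.
  apply Rinv_0_lt_compat; lra.
  rewrite <- Rinv_1. apply Rinv_le_contravar; lra.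
Qed.

Lemma outer_bound N x n A : Sn N -> vanish n x -> admissible A ->
  / f (INR (length A)) * rsum (map (g N x) A) <= L n x.
Proof.
  intros hN hn hA.
  assert (hS : rsum (map (g N x) A) <= L n x).
  { apply Rle_trans with (rsum (map (fun E => Lp n (inb E) x) (map snd A))).
    - apply rsum_le_nth. rewrite !length_map; reflexivity.
      intros i hi. rewrite length_map in hi.
      rewrite (@nth_indep _ (map (g N x) A) i 0 (g N x pdef)) by (rewrite length_map; lia).
      rewrite map_nth.
      set (h := fun E => Lp n (inb E) x).
      rewrite (@nth_indep _ (map h (map snd A)) i 0 (h (snd pdef))) by (rewrite !length_map; lia).
      rewrite map_nth.
      assert (e1 : nth i (map snd A) (snd pdef) = snd (nth i A pdef)) by exact (map_nth snd A pdef i).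
      rewrite e1. unfold h. rewrite <- L_restr_Lp. apply g_le; assumption.
    - apply pw_sum0. apply pw_of_nth. intros i j hij. rewrite length_map in hij.
      destruct hA as [_ [_ [_ [h _]]]]. destruct (h i j hij) as [_ hs].
      assert (e1 : nth i (map snd A) nil = snd (nth i A pdef)) by exact (map_nth snd A pdef i).
      assert (e2 : nth j (map snd A) nil = snd (nth j A pdef)) by exact (map_nth snd A pdef j).
      rewrite e1, e2. exact hs. }
  pose proof (inv_f_bounds A hA). pose proof (L_nonneg n x).
  set (t := / f (INR (length A))) in *. set (S := rsum (map (g N x) A)) in *.
  destruct (Rle_dec 0 S); nra.
Qed.

Definition A0 : list (nat * list nat) := [(2%nat, nil)].

Lemma adm_A0 : admissible A0.
Proof.
  unfold admissible, A0. split; [simpl; lia|]. split.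
  { intros i hi. simpl in hi. destruct i; [simpl; constructor|lia]. }
  split; [simpl; lia|]. split.
  - intros i j h. simpl in h. lia.
  - intros i h. simpl in h. lia.
Qed.

Lemma outer_lub N x : Sn N -> c00 x -> is_lub (outer_set N x) (Sup (outer_set N x)).
Proof.
  intros hN hx. destruct hx as [n hn]. apply Sup_spec, lub_ex with (L n x).
  - intros v hv. destruct (outer_canon N x v hN (ex_intro _ n hn) hv) as [A [hA ->]].
    apply outer_bound; assumption.
  - eexists. apply outer_mk. exact hN. exists n; exact hn. apply adm_A0.
Qed.

Definition T N x := Rmax (supn x) (Sup (outer_set N x)).

Lemma T_mono N1 N2 : Sn N1 -> Sn N2 -> (forall x, c00 x -> N1 x <= N2 x) ->
  forall x, c00 x -> T N1 x <= T N2 x.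
Proof.
  intros hN1 hN2 hle x hx. unfold T. apply Rmax_lub. apply Rmax_l.
  eapply Rle_trans; [|apply Rmax_r].
  apply lub_le with (outer_set N1 x). apply outer_lub; assumption.
  intros v hv. destruct (outer_canon N1 x v hN1 hx hv) as [A [hA ->]].
  eapply Rle_trans; [|apply le_lub with (P := outer_set N2 x); [apply outer_lub; eassumption|apply (outer_mk N2 x A); assumption]].
  apply Rmult_le_compat_l. left; apply inv_f_bounds; exact hA.
  apply rsum_map_le. intros p _. unfold g at 1.
  apply lub_le with (triple_set N1 (fst p) (restr (snd p) x)).
  apply triple_lub; [assumption|apply c00_restr; assumption].
  intros w [Fs [hl [hinc ->]]].
  eapply Rle_trans; [|apply le_lub with (P := triple_set N2 (fst p) (restr (snd p) x)); [apply triple_lub; [exact hN2|apply c00_restr; exact hx]|exists Fs; split; [exact hl|split; [exact hinc|reflexivity]]]].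
  apply Rmult_le_compat_l. apply Rinv_INR_nonneg. apply rsum_map_le. intros F _.
  apply hle. apply c00_restr, c00_restr, hx.
Qed.

Lemma T_ge N x i : Sn N -> c00 x -> Rabs (x i) <= T N x.
Proof. intros hN hx. unfold T. eapply Rle_trans; [apply supn_ge; exact hx|apply Rmax_l]. Qed.

Lemma Sn_T N : Sn N -> Sn (T N).
Proof.
  intro hN. pose proof hN as (h1 & h2 & h3 & h4).
  split; [|split; [|split]].
  - intros x y hx hy. unfold T. apply Rmax_lub.
    + pose proof (proj1 Sn_supn x y hx hy).
      pose proof (Rmax_l (supn x) (Sup (outer_set N x))).
      pose proof (Rmax_l (supn y) (Sup (outer_set N y))). lra.
    + apply lub_le with (outer_set N (fun i => x i + y i)).
      apply outer_lub; [exact hN|apply c00_add; assumption].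
      intros v hv. destruct (outer_canon N _ v hN (c00_add x y hx hy) hv) as [A [hA ->]].
      pose proof (inv_f_bounds A hA) as hf.
      apply Rle_trans with (/ f (INR (length A)) * rsum (map (g N x) A) + / f (INR (length A)) * rsum (map (g N y) A)).
      * rewrite <- Rmult_plus_distr_l, <- rsum_map_add. apply Rmult_le_compat_l; [lra|].
        apply rsum_map_le. intros p _. unfold g at 1.
        apply lub_le with (triple_set N (fst p) (restr (snd p) (fun i => x i + y i))).
        apply triple_lub; [exact hN|apply c00_restr, c00_add; assumption].
        intros w [Fs [hl [hinc ->]]].
        apply Rle_trans with (/ INR (fst p) * rsum (map (fun F => N (restr F (restr (snd p) x))) Fs) + / INR (fst p) * rsum (map (fun F => N (restr F (restr (snd p) y))) Fs)).
        -- rewrite <- Rmult_plus_distr_l, <- rsum_map_add. apply Rmult_le_compat_l. apply Rinv_INR_nonneg.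
           apply rsum_map_le. intros F _. rewrite restr_add, restr_add. apply h1; apply c00_restr, c00_restr; assumption.
        -- apply Rplus_le_compat.
           ++ apply le_lub with (P := triple_set N (fst p) (restr (snd p) x)).
              apply triple_lub; [exact hN|apply c00_restr; assumption].
              exists Fs; split; [exact hl|split; [exact hinc|reflexivity]].
           ++ apply le_lub with (P := triple_set N (fst p) (restr (snd p) y)).
              apply triple_lub; [exact hN|apply c00_restr; assumption].
              exists Fs; split; [exact hl|split; [exact hinc|reflexivity]].
      * apply Rplus_le_compat; (eapply Rle_trans; [|apply Rmax_r]).
        -- apply le_lub with (P := outer_set N x). apply outer_lub; assumption. apply outer_mk; assumption.
        -- apply le_lub with (P := outer_set N y). apply outer_lub; assumption. apply outer_mk; assumption.
  - apply homog_from_le.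
    + intros x hx. pose proof (T_ge N x 0 hN hx). pose proof (Rabs_pos (x 0%nat)). lra.
    + intros a x hx. unfold T. apply Rmax_lub.
      * rewrite (proj1 (proj2 Sn_supn)) by exact hx. apply Rmult_le_compat_l; [apply Rabs_pos|apply Rmax_l].
      * apply lub_le with (outer_set N (fun i => a * x i)).
        apply outer_lub; [exact hN|apply c00_scale; assumption].
        intros v hv. destruct (outer_canon N _ v hN (c00_scale a x hx) hv) as [A [hA ->]].
        pose proof (inv_f_bounds A hA) as hf.
        apply Rle_trans with (Rabs a * (/ f (INR (length A)) * rsum (map (g N x) A))).
        -- replace (Rabs a * (/ f (INR (length A)) * rsum (map (g N x) A))) with
             (/ f (INR (length A)) * rsum (map (fun z => Rabs a * g N x z) A)) by (rewrite rsum_map_scale; ring).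
           apply Rmult_le_compat_l; [lra|]. apply rsum_map_le. intros p _. unfold g at 1.
           apply lub_le with (triple_set N (fst p) (restr (snd p) (fun i => a * x i))).
           apply triple_lub; [exact hN|apply c00_restr, c00_scale; assumption].
           intros w [Fs [hl [hinc ->]]].
           apply Rle_trans with (Rabs a * (/ INR (fst p) * rsum (map (fun F => N (restr F (restr (snd p) x))) Fs))).
           ++ replace (Rabs a * (/ INR (fst p) * rsum (map (fun F => N (restr F (restr (snd p) x))) Fs))) with
                (/ INR (fst p) * rsum (map (fun F => Rabs a * N (restr F (restr (snd p) x))) Fs)) by (rewrite rsum_map_scale; ring).
              apply Rmult_le_compat_l. apply Rinv_INR_nonneg. apply rsum_map_le. intros F _.
              rewrite restr_scale, restr_scale, h2. lra. apply c00_restr, c00_restr; assumption.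
           ++ apply Rmult_le_compat_l. apply Rabs_pos.
              apply le_lub with (P := triple_set N (fst p) (restr (snd p) x)).
              apply triple_lub; [exact hN|apply c00_restr; assumption].
              exists Fs; split; [exact hl|split; [exact hinc|reflexivity]].
        -- apply Rmult_le_compat_l. apply Rabs_pos. eapply Rle_trans; [|apply Rmax_r].
           apply le_lub with (P := outer_set N x). apply outer_lub; assumption. apply outer_mk; assumption.
  - intros x i hx. apply T_ge; assumption.
  - intros x n hn. unfold T. apply Rmax_lub.
    + apply lub_le with (supset x). apply supn_lub. exists n; exact hn.
      intros v [i ->]. apply vanish_abs; exact hn.
    + apply lub_le with (outer_set N x). apply outer_lub; [exact hN|exists n; exact hn].
      intros v hv. destruct (outer_canon N x v hN (ex_intro _ n hn) hv) as [A [hA ->]].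
      apply outer_bound; assumption.
Qed.

Definition Fam N := Sn N /\ forall x, c00 x -> N x <= T N x.

Lemma Fam_supn : Fam supn.
Proof. split. apply Sn_supn. intros x hx. unfold T. apply Rmax_l. Qed.

Definition famset x := fun v => exists N, Fam N /\ v = N x.
Definition Nstar x := Sup (famset x).

Lemma Nstar_lub x : c00 x -> is_lub (famset x) (Nstar x).
Proof.
  intros [n hn]. apply Sup_spec, lub_ex with (L n x).
  - intros v [N [[hN _] ->]]. apply hN; exact hn.
  - exists (supn x). exists supn. split; [apply Fam_supn|reflexivity].
Qed.

Lemma Nstar_ge N x : Fam N -> c00 x -> N x <= Nstar x.
Proof. intros hF hx. apply le_lub with (famset x). apply Nstar_lub; exact hx. exists N; split; [exact hF|reflexivity]. Qed.

Lemma Sn_Nstar : Sn Nstar.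
Proof.
  split; [|split; [|split]].
  - intros x y hx hy. apply lub_le with (famset (fun i => x i + y i)).
    apply Nstar_lub, c00_add; assumption.
    intros v [N [hF ->]]. pose proof (proj1 (proj1 hF) x y hx hy).
    pose proof (Nstar_ge N x hF hx). pose proof (Nstar_ge N y hF hy). lra.
  - apply homog_from_le.
    + intros x hx. pose proof (Nstar_ge supn x Fam_supn hx). pose proof (supn_ge x 0 hx).
      pose proof (Rabs_pos (x 0%nat)). lra.
    + intros a x hx. apply lub_le with (famset (fun i => a * x i)).
      apply Nstar_lub, c00_scale; assumption.
      intros v [N [hF ->]]. rewrite (proj1 (proj2 (proj1 hF))) by exact hx.
      apply Rmult_le_compat_l. apply Rabs_pos. apply Nstar_ge; assumption.
  - intros x i hx. eapply Rle_trans; [apply supn_ge; exact hx|]. apply Nstar_ge; [apply Fam_supn|exact hx].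
  - intros x n hn. apply lub_le with (famset x). apply Nstar_lub. exists n; exact hn.
    intros v [N [[hN _] ->]]. apply hN; exact hn.
Qed.

Lemma Fam_Nstar : Fam Nstar.
Proof.
  split. apply Sn_Nstar. intros x hx. apply lub_le with (famset x). apply Nstar_lub; exact hx.
  intros v [N [hF ->]]. eapply Rle_trans. apply (proj2 hF x hx).
  apply T_mono; [apply (proj1 hF)|apply Sn_Nstar| |exact hx].
  intros z hz. apply Nstar_ge; assumption.
Qed.

Lemma Nstar_fix x : c00 x -> Nstar x = T Nstar x.
Proof.
  intro hx. apply Rle_antisym. apply (proj2 Fam_Nstar x hx).
  apply Nstar_ge; [|exact hx]. split. apply Sn_T, Sn_Nstar.
  apply T_mono. apply Sn_Nstar. apply Sn_T, Sn_Nstar. apply (proj2 Fam_Nstar).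
Qed.

Theorem proposition2p3 :
  exists N : (nat -> R) -> R,
    is_norm_c00 N /\
    (forall (m : nat) (y : nat -> R), (2 <= m)%nat -> c00 y ->
        exists t : R, is_lub (triple_set N m y) t) /\
    (forall x : nat -> R, c00 x ->
        exists a s : R,
          is_lub (fun v => exists i : nat, v = Rabs (x i)) a /\
          is_lub (outer_set N x) s /\
          N x = Rmax a s).
Proof.
  exists Nstar. pose proof Sn_Nstar as (h1 & h2 & h3 & h4).
  split; [|split].
  - split; [exact h1|split; [exact h2|]].
    intros x hx h0 i. pose proof (h3 x i hx). rewrite h0 in H.
    destruct (Req_dec (x i) 0) as [e|ne]; [exact e|].
    pose proof (Rabs_pos_lt _ ne). lra.
  - intros m y _ hy. eexists. apply triple_lub; [apply Sn_Nstar|exact hy].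
  - intros x hx. exists (supn x), (Sup (outer_set Nstar x)). split; [|split].
    + apply supn_lub; exact hx.
    + apply outer_lub; [apply Sn_Nstar|exact hx].
    + apply Nstar_fix; exact hx.
Qed.
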